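(* Let $\mathcal{C}$ be a $d$-uniform properly-connected hypergraph on $V$ and $F$ an edge of $\mathcal{C}$. Then: (i) an edge $C$ of $\mathcal{C}$ is an edge of $\mathcal{C}:F$ if and only if $\operatorname{dist}_{\mathcal{C}}(F,C)\ge d+1$; (ii) $\mathcal{C}:F=\mathcal{C}_{V\setminus(F\cup N_{\mathcal{C}}(F))}$; (iii) the edge set of $\mathcal{C}:F$ equals $\mathcal{C}^{\ge}=\{G\in\mathcal{C}: \operatorname{dist}_{\mathcal{C}}(F,G)\ge d+1\}$; (iv) $\operatorname{c}_{\mathcal{C}}\ge \operatorname{c}_{\mathcal{C}:F}+1$, where $\operatorname{c}_{\mathcal{D}}$ denotes the maximum number of pairwise $(d+1)$-disjoint edges of $\mathcal{D}$.
   Context: A hypergraph $\mathcal{C}$ on a finite vertex set $V$ is a family of pairwise incomparable subsets of $V$ (its edges), each of cardinality at least $2$; it is $d$-uniform if every edge has $d$ elements. For an edge $F$: $N_{\mathcal{C}}(F)=\bigcup\{E\setminus F : E\in\mathcal{C},\ |E\setminus F|=1\}$, and $\mathcal{C}:F$ is the hypergraph on $V\setminus(F\cup N_{\mathcal{C}}(F))$ whose edges are the members of cardinality at least $2$ among the inclusion-minimal members of $\{E\setminus F: E\in\mathcal{C},E\neq F\}$. For $A\subseteq V$, $\mathcal{C}_A=\{E\in\mathcal{C}: E\subseteq A\}$ is the induced subhypergraph on $A$. Given edges $F,G$ with $|F|\ge |G|$, a proper chain from $F$ to $G$ is a sequence $(E_0=F,x_1,E_1,x_2,\dots,x_n,E_n=G)$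 with distinct vertices $x_i$ and distinct edges $E_j$ such that $x_1\in E_0$, $x_n\in E_n$, $x_k,x_{k+1}\in E_k$ for $k=1,\dots,n-1$, and $|E_i\cap E_{i+1}|=|E_{i+1}|-1$ for $i=0,\dots,n-1$; its length is $n$. It is irredundant if no subsequence of it is a proper chain from $F$ to $G$. The distance $\operatorname{dist}_{\mathcal{C}}(F,G)$ is the minimum length of a proper irredundant chain from $F$ to $G$ ($\infty$ if none). A $d$-uniform hypergraph is properly-connected if $\operatorname{dist}_{\mathcal{C}}(F,G)=d-|F\cap G|$ for any two edges with $F\cap G\neq\emptyset$. A set of edges is pairwise $t$-disjoint if any two of its distinct members have distance at least $t$ (distances in (iv) for $\mathcal{C}:F$ are taken in $\mathcal{C}:F$). *)

(* Defs.v *)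
From mathcomp Require Import all_boot.
From mathcomp Require Import boolp.

Set Implicit Arguments.
Unset Strict Implicit.
Unset Printing Implicit Defensive.

Section Hypergraphs.
Variable V : finType.

Definition hypergraph (C : {set {set V}}) : Prop :=
  (forall E, E \in C -> 2 <= #|E|) /\
  (forall E E', E \in C -> E' \in C -> E \subset E' -> E = E').

Definition uniform (d : nat) (C : {set {set V}}) : Prop :=
  forall E, E \in C -> #|E| = d.

Definition nbh (C : {set {set V}}) (F : {set V}) : {set V} :=
  \bigcup_(E in C | #|E :\: F| == 1) (E :\: F).

Definition colon_vs (C : {set {set V}}) (F : {set V}) : {set V} :=
  ~: (F :|: nbh C F).

Definition colon_fam (C : {set {set V}}) (F : {set V}) : {set {set V}} :=
  [set E :\: F | E in C & E != F].

Definition colon (C : {set {set V}}) (F : {set V}) : {set {set V}} :=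
  [set D in colon_fam C F |
     [forall D' in colon_fam C F, (D' \subset D) ==> (D' == D)] && (2 <= #|D|)].

Definition induced (C : {set {set V}}) (A : {set V}) : {set {set V}} :=
  [set E in C | E \subset A].

(* A chain (E_0 = F, x_1, E_1, ..., x_n, E_n) is encoded by its start F and
   the list of steps [(x_1,E_1); ...; (x_n,E_n)]. *)
Definition chain_edges (F : {set V}) (ps : seq (V * {set V})) : seq {set V} :=
  F :: map snd ps.

Definition chain_seq (F : {set V}) (ps : seq (V * {set V}))
  : seq (V + {set V}) :=
  inr F :: flatten (map (fun p => [:: inl p.1; inr p.2]) ps).

Definition proper_chain (C : {set {set V}}) (F G : {set V})
  (ps : seq (V * {set V})) : bool :=
  [&& #|G| <= #|F|,
      all (fun E => E \in C) (chain_edges F ps),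
      last F (map snd ps) == G,
      uniq (map fst ps),
      uniq (chain_edges F ps) &
      all (fun q : {set V} * (V * {set V}) =>
             [&& q.2.1 \in q.1, q.2.1 \in q.2.2 &
                 #|q.1 :&: q.2.2| == #|q.2.2| - 1])
          (zip (chain_edges F ps) ps)].

Definition irredundant (C : {set {set V}}) (F G : {set V})
  (ps : seq (V * {set V})) : Prop :=
  forall ps', subseq (chain_seq F ps') (chain_seq F ps) ->
    proper_chain C F G ps' -> ps' = ps.

Definition has_chain_of_length (C : {set {set V}}) (F G : {set V}) (n : nat)
  : bool :=
  `[< exists ps, [/\ proper_chain C F G ps, irredundant C F G ps &
                     size ps = n] >].

(* distance: Some n = minimal length, None = infinity *)
Definition dist (C : {set {set V}}) (F G : {set V}) : option nat :=
  match pselect (exists n, has_chain_of_length C F G n) with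
  | left h => Some (ex_minn h)
  | right _ => None
  end.

Definition dist_ge (x : option nat) (t : nat) : bool :=
  if x is Some k then t <= k else true.

Definition properly_connected (d : nat) (C : {set {set V}}) : Prop :=
  forall F G, F \in C -> G \in C -> F :&: G != set0 ->
    dist C F G = Some (d - #|F :&: G|).

Definition pairwise_tdisjoint (D : {set {set V}}) (t : nat)
  (S : {set {set V}}) : bool :=
  [forall G in S, forall H in S, (G != H) ==> dist_ge (dist D G H) t].

Definition cnum (d : nat) (D : {set {set V}}) : nat :=
  \max_(S : {set {set V}} | (S \subset D) && pairwise_tdisjoint D d.+1 S) #|S|.

End Hypergraphs.

(* Main.v *)
Require Import Defs.
From mathcomp Require Import all_boot.
From mathcomp Require Import boolp.
From mathcomp Require Import zify.
From Stdlib Require Import Classical.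

Set Implicit Arguments.
Unset Strict Implicit.
Unset Printing Implicit Defensive.

Section Aux.
Variable V : finType.
Implicit Types (C D : {set {set V}}) (A B E F G H : {set V}).

Lemma size_chain_seq A (ps : seq (V * {set V})) :
  size (chain_seq A ps) = (size ps).*2.+1.
Proof.
rewrite /chain_seq /=; congr S.
by elim: ps => //= p ps ->; rewrite doubleS.
Qed.

Lemma chain_seq_inj A (ps1 ps2 : seq (V * {set V})) :
  chain_seq A ps1 = chain_seq A ps2 -> ps1 = ps2.
Proof.
rewrite /chain_seq => -[].
elim: ps1 ps2 => [|[x1 e1] ps1 IH] [|[x2 e2] ps2] //= [-> -> /IH ->] //.
Qed.

Lemma distP_some D A B k : dist D A B = Some k ->
  exists ps, proper_chain D A B ps /\ size ps = k.
Proof.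
rewrite /dist; case: pselect => // h [<-].
case: ex_minnP => m /asboolP [ps [h1 _ h3]] _.
by exists ps.
Qed.

Lemma dist_le D A B ps : proper_chain D A B ps ->
  exists2 k, dist D A B = Some k & k <= size ps.
Proof.
move: {2}(size ps) (erefl (size ps)) => n; elim/ltn_ind: n ps => n IHn ps sz pc.
have IH : forall ps', size ps' < size ps -> proper_chain D A B ps' -> exists2 k, dist D A B = Some k & k <= size ps'.
  by move=> ps' lt; apply: (IHn (size ps')) => //; rewrite -sz.
case: (classic (irredundant D A B ps)) => irr.
  have hc : has_chain_of_length D A B (size ps).
    by apply/asboolP; exists ps.
  rewrite /dist; case: pselect => [h|h]; last by exfalso; apply: h; exists (size ps).
  exists (ex_minn h) => //.
  by case: ex_minnP => m _ /(_ _ hc).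
have [ps' [sub pc' ne]] : exists ps', [/\ subseq (chain_seq A ps') (chain_seq A ps),
     proper_chain D A B ps' & ps' <> ps].
  apply: NNPP => hn; apply: irr => ps' s p.
  by apply: NNPP => hne; apply: hn; exists ps'.
have lt : size ps' < size ps.
  have := size_subseq_leqif sub; rewrite !size_chain_seq => -[le eq].
  rewrite ltn_neqAle; apply/andP; split; last by move: le; rewrite ltnS leq_double.
  apply/negP => /eqP e; apply: ne; apply: (@chain_seq_inj A).
  by move: eq; rewrite e eqxx => /esym/eqP.
have [k hk kle] := IH ps' lt pc'.
by exists k => //; apply: leq_trans kle (ltnW lt).
Qed.

Lemma dist_geP D A B t :
  dist_ge (dist D A B) t <-> (forall ps, proper_chain D A B ps -> t <= size ps).
Proof.
split.
  move=> h ps /dist_le [k hk le]; move: h; rewrite hk /= => tk.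
  exact: leq_trans tk le.
case e: (dist D A B) => [k|] //= h.
by have [ps [pc <-]] := distP_some e; apply: h.
Qed.

End Aux.
Section Comb.
Variable V : finType.
Variable d : nat.
Variable C : {set {set V}}.
Hypothesis unif : uniform d C.
Implicit Types (A B E F G H X Y : {set V}).

Definition R A B := #|A :&: B| == #|B| - 1.

Lemma zip_info X (ps : seq (V * {set V})) :
  all (fun q : {set V} * (V * {set V}) =>
             [&& q.2.1 \in q.1, q.2.1 \in q.2.2 &
                 #|q.1 :&: q.2.2| == #|q.2.2| - 1])
          (zip (X :: map snd ps) ps) ->
  path R X (map snd ps) /\ all (fun p : V * {set V} => (p.1 \in p.2)) ps.
Proof.
elim: ps X => [|[x E] ps IH] X //= /andP[/and3P[_ h2 h3] /IH [h4 h5]].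
by rewrite /R h3 h2 h4 h5.
Qed.

Lemma pcP D A B ps : proper_chain D A B ps ->
  [/\ #|B| <= #|A|, all (fun E => E \in D) (A :: map snd ps),
      last A (map snd ps) = B, uniq (map fst ps) &
      uniq (A :: map snd ps)] /\ path R A (map snd ps) /\
      (all (fun p : V * {set V} => (p.1 \in p.2)) ps).
Proof.
case/and5P=> h1 h2 /eqP h3 h4 /andP[h5 /zip_info [h6 h7]].
by split.
Qed.

Lemma pc_sub (D D' : {set {set V}}) A B ps : proper_chain D A B ps ->
  all (fun E => E \in D') (A :: map snd ps) -> proper_chain D' A B ps.
Proof.
by case/and5P=> h1 h2 h3 h4 h5 h; apply/and5P; split.
Qed.

Lemma card_diff1 X Y : #|Y :\: X| <= 1 -> forall B, #|Y :&: B| <= #|X :&: B| + 1.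
Proof.
move=> h B.
have sub : Y :&: B \subset (X :&: B) :|: (Y :\: X).
  apply/subsetP => z; rewrite !inE.
  by case: (z \in X); case: (z \in Y); case: (z \in B).
apply: leq_trans (subset_leq_card sub) _.
rewrite cardsU; apply: leq_trans (leq_subr _ _) _.
by rewrite leq_add2l.
Qed.

Lemma step_le A E : A \in C -> E \in C -> R A E -> forall B,
  #|E :&: B| <= #|A :&: B| + 1 /\ #|A :&: B| <= #|E :&: B| + 1.
Proof.
move=> hA hE; rewrite /R => /eqP hAE B.
have dA := unif hA; have dE := unif hE.
have h1 := cardsID A E; have h2 := cardsID E A.
rewrite setIC hAE dE in h1; rewrite hAE dE dA in h2.
split; apply: card_diff1; lia.
Qed.

Lemma path_cnt X s : all (fun E => E \in C) (X :: s) -> path R X s -> forall B,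
  #|X :&: B| <= #|last X s :&: B| + size s /\ #|last X s :&: B| <= #|X :&: B| + size s.
Proof.
elim: s X => [|Y s IH] X /=.
  by move=> _ _ B; rewrite addn0.
case/and3P=> hX hY hs /andP[hR hp] B.
have [a b] := step_le hX hY hR B.
have [c e] := IH Y (introT andP (conj hY hs)) hp B.
lia.
Qed.

End Comb.
Section Main.
Variable V : finType.
Variable d : nat.
Variable C : {set {set V}}.
Hypothesis hyp : hypergraph C.
Hypothesis unif : uniform d C.
Hypothesis pconn : properly_connected d C.
Variable F : {set V}.
Hypothesis hF : F \in C.
Implicit Types (A B E G H X Y : {set V}).

Lemma d2 : 2 <= d.
Proof. by rewrite -(unif hF); apply: hyp.1. Qed.

Lemma nbhP E w : E \in C -> #|E :\: F| = 1 -> w \in E :\: F -> w \in nbh C F.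
Proof.
move=> hE h1 hw; apply/bigcupP; exists E => //.
by rewrite hE h1 eqxx.
Qed.

Lemma nbhP2 w : w \in nbh C F ->
  exists2 E, E \in C & E :\: F = [set w].
Proof.
case/bigcupP => E /andP[hE /cards1P [z hz]] hw.
exists E => //; move: hw; rewrite hz inE => /eqP ->.
done.
Qed.

Lemma diff1 E : E \in C -> #|F :&: E| = d - 1 -> #|E :\: F| = 1.
Proof.
move=> hE h; have := cardsID F E; rewrite setIC h (unif hE).
have := d2; lia.
Qed.

Lemma U1 E : E \in C -> F :&: E != set0 -> E != F ->
  exists E1 w, [/\ E1 \in C, E1 :\: F = [set w] & w \in E].
Proof.
move=> hE ne neF.
have [ps [pc sz]] := distP_some (pconn hF hE ne).
have [[_ allC lst _ _] [pth _]] := pcP pc.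
case: ps pc sz allC lst pth => [|[x1 E1] rest] pc sz allC lst pth.
  by move: neF; rewrite -lst eqxx.
move: allC pth lst => /= /and3P[_ hE1 hrest] /andP[hR hp] lst.
have [_ c1] := path_cnt unif (introT andP (conj hE1 hrest)) hp E.
rewrite lst setIid (unif hE) size_map in c1.
have hd1 : #|F :&: E1| = d - 1 by move: hR; rewrite /R (unif hE1) => /eqP.
have h1 := diff1 hE1 hd1.
case/cards1P: (introT eqP h1) => w hw.
exists E1, w; split => //.
apply/negP => wE.
have sub : E1 :&: E \subset F :&: E.
  apply/subsetP => z; rewrite !inE => /andP[zE1 zE].
  rewrite zE andbT; case zF: (z \in F) => //.
  have : z \in E1 :\: F by rewrite inE zF zE1.
  by rewrite hw inE => /eqP zw; move: wE; rewrite -zw zE.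
have := subset_leq_card sub.
move: sz c1 => /= sz c1.
have : #|F :&: E| <= d by rewrite -(unif hF); apply: subset_leq_card; apply: subsetIl.
lia.
Qed.

Lemma nonempty_F : F != set0.
Proof. by apply/negP => /eqP e; have := d2; rewrite -(unif hF) e cards0. Qed.

Lemma U2 E : E \in C -> E \subset colon_vs C F ->
  (forall ps, proper_chain C F E ps -> d < size ps) /\
  (forall ps, proper_chain C E F ps -> d < size ps).
Proof.
move=> hE sE.
have nF : forall z, z \in E -> z \notin F.
  by move=> z /(subsetP sE); rewrite !inE negb_or => /andP[].
have nN : forall z, z \in E -> z \notin nbh C F.
  by move=> z /(subsetP sE); rewrite !inE negb_or => /andP[].
have EF : E != F.
  apply/negP => /eqP e; case/set0Pn: nonempty_F => z zF.
  by move: (nF z); rewrite e zF => /(_ isT).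
split=> ps pc; rewrite ltnNge; apply/negP => le.
- have [[_ allC lst _ _] [pth _]] := pcP pc.
  case: ps pc le allC lst pth => [|[x1 E1] rest] pc le allC lst pth.
    by move: EF; rewrite -lst eqxx.
  move: allC pth lst => /= /and3P[_ hE1 hrest] /andP[hR hp] lst.
  have [_ c1] := path_cnt unif (introT andP (conj hE1 hrest)) hp E.
  rewrite lst setIid (unif hE) size_map in c1.
  have : 0 < #|E1 :&: E| by move: le c1 => /=; lia.
  rewrite card_gt0 => /set0Pn [z]; rewrite inE => /andP[zE1 zE].
  have hd1 : #|F :&: E1| = d - 1 by move: hR; rewrite /R (unif hE1) => /eqP.
  have h1 := diff1 hE1 hd1.
  have : z \in nbh C F by apply: (nbhP hE1 h1); rewrite inE zE1 nF.
  by rewrite (negPf (nN z zE)).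
- have [[_ allC lst _ _] [pth _]] := pcP pc.
  case/lastP: ps pc le allC lst pth => [|rest p] pc le allC lst pth.
    by move: EF; rewrite -lst eqxx.
  move: allC pth lst; rewrite map_rcons last_rcons rcons_path => allC /andP[hp hR] lst.
  set P := last E (map snd rest) in hR.
  move: allC; rewrite -rcons_cons all_rcons => /andP[_ allC].
  have hP : P \in C by move/allP: allC; apply; apply: mem_last.
  have [c1 _] := path_cnt unif allC hp E.
  rewrite setIid (unif hE) -/P size_map in c1.
  have : 0 < #|P :&: E| by move: le c1; rewrite size_rcons; lia.
  rewrite card_gt0 => /set0Pn [z]; rewrite inE => /andP[zP zE].
  have hd1 : #|F :&: P| = d - 1.
    by move: hR; rewrite /R lst (unif hF) setIC => /eqP.
  have h1 := diff1 hP hd1.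
  have : z \in nbh C F by apply: (nbhP hP h1); rewrite inE zP nF.
  by rewrite (negPf (nN z zE)).
Qed.

Lemma Cont A B s : all (fun E => E \in C) (A :: s) -> path (@R V) A s ->
  last A s = B -> size s + #|A :&: B| <= d -> forall E, E \in s -> E \subset A :|: B.
Proof.
move=> allC pth lst sz E hEs; case/splitPr: hEs allC pth lst sz => s1 s2 allC pth lst sz.
move: allC; rewrite -cat_cons all_cat => /andP[allC1 allC2].
move: pth; rewrite cat_path /= => /and3P[p1 hR p2].
have hE : E \in C by case/andP: allC2.
have allp : all (fun E => E \in C) (A :: rcons s1 E).
  by rewrite -rcons_cons all_rcons allC1 hE.
have pp : path (@R V) A (rcons s1 E) by rewrite rcons_path p1 hR.
have [c1 _] := path_cnt unif allp pp A.
rewrite last_rcons size_rcons setIid in c1.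
have [_ c2] := path_cnt unif allC2 p2 B.
rewrite last_cat /= in lst; rewrite lst setIid in c2.
have hA : A \in C by case/andP: allC1.
have hB : B \in C by rewrite -lst; move/allP: allC2; apply; apply: mem_last.
rewrite (unif hA) in c1; rewrite (unif hB) in c2.
have i1 : #|(E :&: A) :&: (E :&: B)| <= #|A :&: B|.
  by apply: subset_leq_card; apply/subsetP => z; rewrite !inE => /andP[/andP[_ ->] /andP[_ ->]].
have cu := cardsU (E :&: A) (E :&: B).
have : E :&: (A :|: B) == E.
  rewrite eqEcard subsetIl /= setIUr cu (unif hE).
  move: sz c1 c2 i1; rewrite size_cat /=.
  have : #|(E :&: A) :&: (E :&: B)| <= #|E :&: A| + #|E :&: B| by
    apply: leq_trans (subset_leq_card (subsetIl _ _)) (leq_addr _ _).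
  lia.
by move/eqP/setIidPl.
Qed.
Lemma U3 E w : E \in C -> (forall z, z \in E -> z \notin F) -> w \in E -> w \in nbh C F ->
  exists ps, proper_chain C F E ps /\ size ps = d.
Proof.
move=> hE nF wE /nbhP2 [E' hE' hw].
have dd := d2.
have c1 : #|E' :&: F| = d - 1.
  have := cardsID F E'; rewrite hw cards1 (unif hE') => <-; by rewrite addnK.
have wE' : w \in E'.
  have : w \in E' :\: F by rewrite hw set11.
  by rewrite inE => /andP[].
have sub : E' :&: E \subset [set w].
  by apply/subsetP => z /setIP [zE' zE]; rewrite -hw inE zE' nF.
have wi : w \in E' :&: E by rewrite inE wE' wE.
have c2 : #|E' :&: E| = 1.
  apply/eqP; rewrite eqn_leq -(cards1 w) subset_leq_card //.
  by rewrite cards1 card_gt0; apply/set0Pn; exists w.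
have ne : E' :&: E != set0 by apply/set0Pn; exists w.
have [ps2 [pc sz]] := distP_some (pconn hE' hE ne).
rewrite c2 in sz.
have pc0 := pc.
have [[_ allC lst uq1 uq2] [pth inx]] := pcP pc.
have FE' : F != E'.
  apply/negP => /eqP e; move: hw; rewrite e setDv => /setP /(_ w).
  by rewrite !inE eqxx.
have nFs : F \notin map snd ps2.
  apply/negP => hFs.
  have hs : size (map snd ps2) + #|E' :&: E| <= d.
    rewrite size_map sz c2; move: dd; clear; lia.
  have sFE := Cont allC pth lst hs hFs.
  have sFE' : F \subset E'.
    apply/subsetP => z zF; move: (subsetP sFE z zF); rewrite inE => /orP[//|zE].
    by move: (nF z zE); rewrite zF.
  by move: FE'; rewrite (hyp.2 _ _ hF hE' sFE') eqxx.
have [xE [hx1 hx2]] : exists xE, xE \in map fst ps2 /\ xE \in E.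
  case: ps2 pc sz allC lst uq1 uq2 pth inx nFs {pc0} => [|p ps2'] pc sz allC lst uq1 uq2 pth inx nFs.
    by move: sz dd => /=; clear; lia.
  have : E \in map snd (p :: ps2') by rewrite -lst /=; apply: mem_last.
  case/mapP => q qin qE; exists q.1; split; first by apply: map_f.
  by rewrite qE; move/allP: inx; apply.
have [y [yF yE' yn]] : exists y, [/\ y \in F, y \in E' & y \notin map fst ps2].
  apply: NNPP => hn.
  have sub2 : F :&: E' \subset [set x | x \in map fst ps2] :\ xE.
    apply/subsetP => z; rewrite inE => /andP[zF zE'].
    rewrite !inE; apply/andP; split.
      by apply/negP => /eqP ezx; move: (nF _ hx2); rewrite -ezx zF.
    by apply: NNPP => zn; apply: hn; exists z; split => //; apply/negP.
  have := subset_leq_card sub2.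
  have := cardsD1 xE [set x | x \in map fst ps2].
  rewrite inE hx1 cardsE (card_uniqP uq1) size_map sz setIC c1 => -> /=.
  move: dd; clear; lia.
exists ((y, E') :: ps2); split; last by rewrite /= sz; move: dd; clear; lia.
case/and5P: pc0 => _ _ _ _ /andP[_ hz].
apply/and5P; split.
- by rewrite (unif hE) (unif hF).
- by rewrite /= hF.
- by rewrite /= lst.
- by rewrite /= yn.
- apply/andP; split; first by rewrite /= inE negb_or FE' nFs.
  by rewrite /= yF yE' /= hz (unif hE') setIC c1 eqxx.
Qed.
Lemma diff_self E : F :&: E = set0 -> E :\: F = E.
Proof.
move=> e; apply/setP => z; rewrite inE; case zE: (z \in E); rewrite ?andbT ?andbF //.
apply/negP => zF; have : z \in F :&: E by rewrite inE zF zE.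
by rewrite e inE.
Qed.

Lemma colon_char : colon C F = induced C (colon_vs C F).
Proof.
apply/setP => D; rewrite /colon /induced !inE.
apply/idP/idP.
- case/andP => /imsetP [E]; rewrite inE => /andP[hE EF] -> /andP[/forallP minD h2].
  have EF0 : F :&: E = set0.
    apply/eqP; apply: NNPP => ne.
    have [E1 [w [hE1 hw wE]]] := U1 hE (introT negP ne) EF.
    have E1F : E1 != F.
      by apply/negP => /eqP e; move: hw; rewrite e setDv => /setP /(_ w); rewrite !inE eqxx.
    have wF : w \notin F.
      have : w \in E1 :\: F by rewrite hw set11.
    by rewrite inE => /andP[].
    have inf : [set w] \in colon_fam C F.
      by apply/imsetP; exists E1; rewrite ?inE ?hE1 ?E1F.
    have subw : [set w] \subset E :\: F by rewrite sub1set inE wE wF.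
    have := minD [set w]; rewrite inf subw /= => /eqP e.
    by move: h2; rewrite -e cards1.
  have eE := diff_self EF0.
  rewrite eE in minD h2 *; rewrite hE /=.
  apply/subsetP => z zE; rewrite !inE negb_or; apply/andP; split.
    apply/negP => zF; have : z \in F :&: E by rewrite inE zF zE.
    by rewrite EF0 inE.
  apply/negP => /nbhP2 [E2 hE2 hw2].
  have E2F : E2 != F.
    by apply/negP => /eqP e; move: hw2; rewrite e setDv => /setP /(_ z); rewrite !inE eqxx.
  have inf : [set z] \in colon_fam C F.
    by apply/imsetP; exists E2; rewrite ?inE ?hE2 ?E2F.
  have := minD [set z]; rewrite inf sub1set zE /= => /eqP e.
  by move: h2; rewrite -e cards1.
- case/andP => hE sE.
  have nF : forall z, z \in D -> z \notin F.
    by move=> z /(subsetP sE); rewrite !inE negb_or => /andP[].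
  have nN : forall z, z \in D -> z \notin nbh C F.
    by move=> z /(subsetP sE); rewrite !inE negb_or => /andP[].
  have EF0 : F :&: D = set0.
    apply/setP => z; rewrite !inE; case zD: (z \in D); last by rewrite andbF.
    by rewrite (negPf (nF z zD)).
  have eE := diff_self EF0.
  have EF : D != F.
    apply/negP => /eqP e; case/set0Pn: nonempty_F => z zF.
    by move: (nF z); rewrite e zF => /(_ isT).
  apply/andP; split.
    by apply/imsetP; exists D; rewrite ?inE ?hE ?EF ?eE.
  apply/andP; split; last by rewrite (unif hE) d2.
  apply/forallP => D'; apply/implyP => /imsetP [E2]; rewrite inE => /andP[hE2 E2F] ->.
  apply/implyP => sub.
  case: (boolP (F :&: E2 == set0)) => [/eqP e0 | ne].
    have eE2 := diff_self e0.
    rewrite eE2 in sub *.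
    by rewrite (hyp.2 _ _ hE2 hE sub).
  have [E1 [w [hE1 hw wE2]]] := U1 hE2 ne E2F.
  have wF : w \notin F.
    have : w \in E1 :\: F by rewrite hw set11.
    by rewrite inE => /andP[].
  have wD : w \in D by apply: (subsetP sub); rewrite inE wF wE2.
  have : w \in nbh C F by apply: (nbhP hE1); rewrite ?hw ?cards1 ?set11.
  by rewrite (negPf (nN w wD)).
Qed.

Lemma colon_dist G H : G \in colon C F -> H \in colon C F ->
  dist_ge (dist (colon C F) G H) d.+1 -> dist_ge (dist C G H) d.+1.
Proof.
move=> hG hH hd; apply/dist_geP => ps pc; rewrite ltnNge; apply/negP => le.
move: (hG) (hH); rewrite colon_char !inE => /andP[hGC sG] /andP[hHC sH].
have [ps0 [pc0 sz0]] : exists ps0, proper_chain C G H ps0 /\ size ps0 + #|G :&: H| <= d.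
  case: (boolP (G :&: H == set0)) => [/eqP e0|ne].
    by exists ps; rewrite e0 cards0 addn0.
  have [ps0 [pc0 s]] := distP_some (pconn hGC hHC ne).
  exists ps0; split => //; rewrite s.
  have : #|G :&: H| <= d by rewrite -(unif hGC); apply: subset_leq_card; apply: subsetIl.
  clear; lia.
have [[_ allC lst _ _] [pth _]] := pcP pc0.
have hs : size (map snd ps0) + #|G :&: H| <= d by rewrite size_map.
have cont := Cont allC pth lst hs.
have pc1 : proper_chain (colon C F) G H ps0.
  apply: pc_sub pc0 _; apply/allP => E; rewrite inE => /orP[/eqP -> // | Es].
  rewrite colon_char inE; apply/andP; split.
    by move/allP: allC; apply; rewrite inE Es orbT.
  by apply: subset_trans (cont E Es) _; rewrite subUset sG sH.
move/dist_geP: hd => /(_ _ pc1).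
move: sz0; clear; lia.
Qed.

Lemma main_result :
  [/\ (forall E, E \in C -> (E \in colon C F <-> dist_ge (dist C F E) d.+1)),
      colon C F = induced C (colon_vs C F),
      colon C F = [set G in C | dist_ge (dist C F G) d.+1] &
      cnum d (colon C F) + 1 <= cnum d C].
Proof.
have cc := colon_char.
have part1 : forall E, E \in C -> (E \in colon C F <-> dist_ge (dist C F E) d.+1).
  move=> E hE; rewrite cc inE hE /=; split.
    by move=> sE; apply/dist_geP => ps pc; exact: (U2 hE sE).1 ps pc.
  move=> hd; apply: NNPP => /negP nsE.
  case: (boolP (F :&: E == set0)) => [/eqP e0 | ne].
    have nF : forall z, z \in E -> z \notin F.
      move=> z zE; apply/negP => zF; have : z \in F :&: E by rewrite inE zF zE.
      by rewrite e0 inE.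
    case/subsetPn: nsE => z zE; rewrite !inE negb_or (nF z zE) /= => /negPn zN.
    have [ps [pc sz]] := U3 hE nF zE zN.
    by move/dist_geP: hd => /(_ _ pc); rewrite sz ltnn.
  move: hd; rewrite (pconn hF hE ne) /=.
  clear; lia.
have FnC : F \notin colon C F.
  apply/negP => /(part1 F hF).
  have ne : F :&: F != set0 by rewrite setIid nonempty_F.
  by rewrite (pconn hF hF ne) /= setIid (unif hF) subnn.
split => //.
  apply/setP => G; rewrite [in RHS]inE; case hG: (G \in C) => /=.
    by apply/idP/idP => h; apply/(part1 G hG).
  by rewrite cc inE hG.
rewrite /cnum.
set P := fun (D : {set {set V}}) (S : {set {set V}}) => (S \subset D) && pairwise_tdisjoint D d.+1 S.
have ne : 0 < #|[pred S | P (colon C F) S]|.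
  apply/card_gt0P; exists set0; rewrite inE /P sub0set /=.
  by apply/forallP => G; rewrite inE.
have [S hS ->] := @eq_bigmax_cond _ [pred S | P (colon C F) S] (fun S => #|S|) ne.
move: hS; rewrite inE /P => /andP[sS pw].
have sC : forall G, G \in S -> G \in C.
  by move=> G /(subsetP sS); rewrite cc inE => /andP[].
have FS : F \notin S by apply/negP => /(subsetP sS); rewrite (negPf FnC).
have : P C (F |: S).
  apply/andP; split.
    by apply/subsetP => G /setU1P [-> //| GS]; apply: sC.
  apply/forallP => G; apply/implyP => hG; apply/forallP => H; apply/implyP => hH.
  apply/implyP => neGH.
  case/setU1P: hG => [eG|GS]; case/setU1P: hH => [eH|HS].
  - by move: neGH; rewrite eG eH eqxx.
  - rewrite eG; apply/(part1 H (sC H HS)); exact: (subsetP sS).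
  - rewrite eH; have GC := sC G GS.
    have := subsetP sS G GS; rewrite cc inE => /andP[_ sG].
    by apply/dist_geP => ps pc; exact: (U2 GC sG).2 ps pc.
  - apply: colon_dist; try exact: (subsetP sS).
    move/forallP: pw => /(_ G); rewrite GS /= => /forallP /(_ H); rewrite HS /=.
    by move/implyP; apply.
move=> PS.
have PS' : (F |: S \subset C) && pairwise_tdisjoint C d.+1 (F |: S) := PS.
have := @leq_bigmax_cond {set {set V}} (fun S0 : {set {set V}} => (S0 \subset C) && pairwise_tdisjoint C d.+1 S0) (fun S0 : {set {set V}} => #|S0|) (F |: S) PS'.
apply: leq_trans.
by rewrite cardsU1 FS addnC.
Qed.

End Main.

Theorem theorem4p1 (V : finType) (d : nat) (C : {set {set V}}) (F : {set V}) :
  hypergraph C -> uniform d C -> properly_connected d C -> F \in C ->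
  [/\ (forall E, E \in C -> (E \in colon C F <-> dist_ge (dist C F E) d.+1)),
      colon C F = induced C (colon_vs C F),
      colon C F = [set G in C | dist_ge (dist C F G) d.+1] &
      cnum d (colon C F) + 1 <= cnum d C].
Proof.
move=> hyp unif pconn hF.
exact: main_result.
Qed.
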